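(* Let $n>24$, $s>0$, $L>9$, and $m=Ln$ (assumed to be an integer). Let $v=(v_1,\dots,v_n)$ with $v_i\ge0$ and $\sum_i v_i=1$. Then $$\mathsf P\left\{\mathrm{AST}(v,x)\le L\,n\,\|v\|\,\|p\|\sqrt{1+\frac{3+6s}{\sqrt L}+\frac{5s^2}{L}}+1\right\}\ \ge\ 1-\frac{10}{9}e^{-s^2/4}.$$
   Context: Standing setup: $U$ is a finite set (the key space) with a probability measure $q$; $T=\{1,\dots,n\}$; $h:U\to T$ is an arbitrary function. $p_i=\sum_{u\in h^{-1}(i)}q(u)$ and $\|p\|^2=\sum_{i=1}^n p_i^2$. $U^m$ carries the product measure $q^m$, and $\mathsf P$ denotes probability under $q^m$ for $x=(x_1,\dots,x_m)\in U^m$. $k_i(x)=|\{j: h(x_j)=i\}|$. $\|\cdot\|$ is the euclidean norm. The vector $v$ is a user's access pattern ($v_i$ = fraction of the user's searches directed to slot $i$). $\mathrm{AST}(v,x)$ denotes the average search time of such a user in a hash table with chaining after the keys $x$ have been inserted; in this model it satisfies $\mathrm{AST}(v,x)\le\sum_{i=1}^n v_i\,k_i(x)$ (search time in slot $i$ identified with chain length, counted with multiplicity). *)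

(* Defs.v *)
From HB Require Import structures.
From mathcomp Require Import all_boot all_order all_algebra.
From mathcomp Require Import all_classical all_reals.
From mathcomp Require Import all_analysis.
Set Implicit Arguments. Unset Strict Implicit. Unset Printing Implicit Defensive.
Import Order.TTheory GRing.Theory Num.Theory.
Local Open Scope ring_scope.

Section Hashing.
Variables (R : realType) (U : finType) (n m : nat).

Definition slot_prob (q : U -> R) (h : U -> 'I_n) (i : 'I_n) : R :=
  \sum_(u | h u == i) q u.

Definition chain_len (h : U -> 'I_n) (x : {ffun 'I_m -> U}) (i : 'I_n) : nat :=
  #|[set j : 'I_m | h (x j) == i]|.

Definition enorm (w : 'I_n -> R) : R := Num.sqrt (\sum_i w i ^+ 2).

Definition prodP (q : U -> R) (E : {ffun 'I_m -> U} -> bool) : R :=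
  \sum_(x : {ffun 'I_m -> U} | E x) \prod_(j < m) q (x j).

End Hashing.

(* Main.v *)
Require Import Defs.
From HB Require Import structures.
From mathcomp Require Import all_boot all_order all_algebra.
From mathcomp Require Import all_classical all_reals.
From mathcomp Require Import all_analysis.
From mathcomp Require Import ring lra.
Import Order.TTheory GRing.Theory Num.Theory.
Local Open Scope ring_scope.

Section Aux.
Variable R : realType.

Lemma exp_bound (x : R) : expR x <= x + expR (2 * x ^+ 2).
Proof.
have [hx|hx] := lerP (1/2) x.
  have : x <= 2 * x ^+ 2 by nra.
  rewrite -ler_expR => h; apply: (le_trans h); lra.
have h1 := expR_ge1Dx (- x).
have h2 := expR_ge1Dx (2 * x ^+ 2).
have hp : 0 < 1 - x by lra.
have -> : expR x = (expR (- x))^-1 by rewrite expRN invrK.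
have h3 : (expR (- x))^-1 <= (1 - x)^-1.
  by rewrite lef_pV2 ?posrE ?expR_gt0 //; lra.
apply: (le_trans h3).
have h4 : (1 - x)^-1 <= 1 + x + 2 * x ^+ 2.
  rewrite -[(1 - x)^-1]div1r ler_pdivrMr //; nra.
lra.
Qed.

Lemma CS (I : finType) (F G : I -> R) :
  (\sum_i F i * G i) ^+ 2 <= (\sum_i F i ^+ 2) * (\sum_i G i ^+ 2).
Proof.
have E : 2 * ((\sum_i F i ^+ 2) * (\sum_i G i ^+ 2) - (\sum_i F i * G i) ^+ 2)
   = \sum_i \sum_j (F i * G j - F j * G i) ^+ 2.
  have e1 : (\sum_i F i ^+ 2) * (\sum_i G i ^+ 2) = \sum_i \sum_j (F i ^+ 2 * G j ^+ 2).
    by rewrite big_distrlr.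
  have e2 : (\sum_i F i ^+ 2) * (\sum_i G i ^+ 2) = \sum_i \sum_j (F j ^+ 2 * G i ^+ 2).
    by rewrite mulrC big_distrlr /=; apply: eq_bigr => i _; apply: eq_bigr => j _; rewrite mulrC.
  have e3 : (\sum_i F i * G i) ^+ 2 = \sum_i \sum_j (F i * G i * (F j * G j)).
    by rewrite expr2 big_distrlr.
  transitivity (\sum_i \sum_j (F i ^+ 2 * G j ^+ 2) + \sum_i \sum_j (F j ^+ 2 * G i ^+ 2)
     - 2 * \sum_i \sum_j (F i * G i * (F j * G j))).
    rewrite -e1 -e2 -e3; ring.
  rewrite -big_split /= mulr_sumr -sumrB; apply: eq_bigr => i _.
  rewrite -big_split /= mulr_sumr -sumrB; apply: eq_bigr => j _; ring.
have : 0 <= \sum_i \sum_j (F i * G j - F j * G i) ^+ 2.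
  by apply: sumr_ge0 => i _; apply: sumr_ge0 => j _; exact: sqr_ge0.
rewrite -E; nra.
Qed.


Lemma chernoff_sum (U : finType) (m : nat) (q f : U -> R) (c lam : R) :
  (forall u, 0 <= q u) -> 0 <= lam ->
  \sum_(x : {ffun 'I_m -> U} | c < \sum_j f (x j)) \prod_j q (x j)
   <= expR (- (lam * c)) * (\sum_u q u * expR (lam * f u)) ^+ m.
Proof.
move=> q0 l0.
have w0 : forall x : {ffun 'I_m -> U}, 0 <= \prod_j q (x j).
  by move=> x; apply: prodr_ge0 => j _.
apply: (@le_trans _ _ (\sum_(x : {ffun 'I_m -> U})
    \prod_j q (x j) * expR (lam * (\sum_j f (x j) - c)))).
  rewrite [X in _ <= X](bigID (fun x : {ffun 'I_m -> U} => c < \sum_j f (x j))) /=.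
  rewrite -[X in X <= _]addr0; apply: lerD.
    apply: ler_sum => x hx; rewrite ler_peMr //.
    rewrite -expR0 ler_expR; apply: mulr_ge0 => //; rewrite subr_ge0; exact: ltW.
  by apply: sumr_ge0 => x _; apply: mulr_ge0 => //; exact: expR_ge0.
have -> : \sum_(x : {ffun 'I_m -> U}) \prod_j q (x j) * expR (lam * (\sum_j f (x j) - c))
   = expR (- (lam * c)) * \sum_(x : {ffun 'I_m -> U}) \prod_j (q (x j) * expR (lam * f (x j))).
  rewrite mulr_sumr; apply: eq_bigr => x _.
  rewrite big_split /= mulrBr addrC expRD mulr_sumr expR_sum; ring.
rewrite -(bigA_distr_bigA (fun (j : 'I_m) u => q u * expR (lam * f u))) /=.
by rewrite prodr_const card_ord.
Qed.


Lemma mgf_bound (U : finType) (q f : U -> R) (mu b lam : R) :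
  (forall u, 0 <= q u) -> \sum_u q u = 1 -> \sum_u q u * f u = mu ->
  (forall u, (f u - mu) ^+ 2 <= b ^+ 2) ->
  \sum_u q u * expR (lam * f u) <= expR (lam * mu + 2 * lam ^+ 2 * b ^+ 2).
Proof.
move=> q0 q1 qf fb.
have -> : \sum_u q u * expR (lam * f u)
   = expR (lam * mu) * \sum_u q u * expR (lam * (f u - mu)).
  rewrite mulr_sumr; apply: eq_bigr => u _.
  by rewrite mulrBr expRB; field; rewrite gt_eqF // expR_gt0.
rewrite expRD ler_pM2l ?expR_gt0 //.
apply: (@le_trans _ _ (\sum_u q u * (lam * (f u - mu) + expR (2 * lam ^+ 2 * b ^+ 2)))).
  apply: ler_sum => u _; apply: ler_wpM2l => //.
  apply: (le_trans (exp_bound _)); rewrite lerD2l ler_expR.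
  rewrite exprMn -mulrA ler_pM2l //; apply: ler_wpM2l => //; exact: sqr_ge0.
have -> : \sum_u q u * (lam * (f u - mu) + expR (2 * lam ^+ 2 * b ^+ 2))
  = lam * (\sum_u q u * f u - mu * \sum_u q u) + expR (2 * lam ^+ 2 * b ^+ 2) * \sum_u q u.
  rewrite [mu * _]mulr_sumr -sumrB [lam * _]mulr_sumr [expR _ * _]mulr_sumr -big_split /=.
  by apply: eq_bigr => u _; ring.
by rewrite qf q1; lra.
Qed.


Lemma fiber_sum (A : finType) (n : nat) (g : A -> 'I_n) (F : A -> 'I_n -> R) :
  \sum_i \sum_(a | g a == i) F a i = \sum_a F a (g a).
Proof.
rewrite (exchange_big_dep xpredT) //=; apply: eq_bigr => a _.
by rewrite (big_pred1 (g a)) // => i; rewrite /= eq_sym.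
Qed.

Lemma chain_sum (U : finType) (n m : nat) (h : U -> 'I_n) (v : 'I_n -> R)
   (x : {ffun 'I_m -> U}) :
  \sum_i v i * (chain_len h x i)%:R = \sum_j v (h (x j)).
Proof.
rewrite /chain_len.
transitivity (\sum_i \sum_(j | h (x j) == i) v i).
  apply: eq_bigr => i _; rewrite -sum1_card natr_sum mulr_sumr.
  rewrite (eq_bigl (fun j => h (x j) == i)); last by move=> j; rewrite inE.
  by apply: eq_bigr => j _; rewrite mulr1.
exact: (@fiber_sum _ _ (fun j => h (x j)) (fun _ i => v i)).
Qed.

End Aux.

Theorem corollary4 (R : realType) (U : finType) (q : U -> R)
  (n : nat) (h : U -> 'I_n) (s L : R) (m : nat) (v : 'I_n -> R)
  (AST : {ffun 'I_m -> U} -> R) :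
  (forall u, 0 <= q u) -> \sum_u q u = 1 ->
  (24 < n)%N -> 0 < s -> 9 < L -> m%:R = L * n%:R ->
  (forall i, 0 <= v i) -> \sum_i v i = 1 ->
  (forall x, AST x <= \sum_i v i * (chain_len h x i)%:R) ->
  prodP q (fun x => AST x <=
     L * n%:R * enorm v * enorm (slot_prob q h)
       * Num.sqrt (1 + (3 + 6 * s) / Num.sqrt L + 5 * s ^+ 2 / L) + 1)
  >= 1 - 10 / 9 * expR (- (s ^+ 2) / 4).
Proof.
move=> q0 q1 n24 s0 L9 hm v0 v1 hAST.
set p := slot_prob q h.
set A := Num.sqrt _.
set c := _ + 1.
set f := fun u => v (h u).
set mu := \sum_u q u * f u.
set b := enorm v.
set np := enorm p.
have nR : 24 < n%:R :> R by rewrite ltr_nat.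
have mpos : 0 < m%:R :> R by rewrite hm; nra.
have b2 : b ^+ 2 = \sum_i v i ^+ 2.
  by rewrite /b /enorm sqr_sqrtr // sumr_ge0 // => i _; exact: sqr_ge0.
have b0 : 0 <= b by exact: sqrtr_ge0.
have p0 : forall i, 0 <= p i by move=> i; apply: sumr_ge0.
have np2 : np ^+ 2 = \sum_i p i ^+ 2.
  by rewrite /np /enorm sqr_sqrtr // sumr_ge0 // => i _; exact: sqr_ge0.
have np0 : 0 <= np by exact: sqrtr_ge0.
have p1 : \sum_i p i = 1.
  rewrite -q1 /p /slot_prob.
  exact: (@fiber_sum R U n h (fun u _ => q u)).
have mup : mu = \sum_i p i * v i.
  rewrite /mu /p /slot_prob -(@fiber_sum R U n h (fun u i => q u * v i)).
  by apply: eq_bigr => i _; rewrite mulr_suml.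
have mu_le : mu <= np * b.
  have := @CS R _ p v; rewrite -mup -b2 -np2 => H.
  have : 0 <= np * b by exact: mulr_ge0.
  nra.
have n_np : 1 <= n%:R * np ^+ 2.
  have := @CS R _ (fun _ => 1) p.
  rewrite np2 (eq_bigr p) ?p1; last by move=> i _; rewrite mul1r.
  by rewrite (eq_bigr (fun _ => 1)) ?sumr_const ?card_ord //= => [|i _]; rewrite ?expr1n ?mulr1n //.
have n_b : 1 <= n%:R * b ^+ 2.
  have := @CS R _ (fun _ => 1) v.
  rewrite -b2 (eq_bigr v) ?v1; last by move=> i _; rewrite mul1r.
  by rewrite (eq_bigr (fun _ => 1)) ?sumr_const ?card_ord //= => [|i _]; rewrite ?expr1n ?mulr1n //.
have vb : forall i, v i <= b.
  move=> i; have : v i ^+ 2 <= b ^+ 2.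
    rewrite b2 (bigD1 i) //= lerDl; apply: sumr_ge0 => j _; exact: sqr_ge0.
  have := v0 i; nra.
have mu0 : 0 <= mu by apply: sumr_ge0 => u _; apply: mulr_ge0 => //; exact: v0.
have mub : mu <= b.
  rewrite /mu -[b]mul1r -q1 mulr_suml; apply: ler_sum => u _.
  by apply: ler_wpM2l => //; exact: vb.
have fb : forall u, (f u - mu) ^+ 2 <= b ^+ 2.
  move=> u; have := vb (h u); have := v0 (h u); rewrite /f; nra.
have L0 : 0 < L by lra.
set l := Num.sqrt L.
have l0 : 0 < l by rewrite sqrtr_gt0.
have hl : l ^+ 2 = L by rewrite sqr_sqrtr // ltW.
set y := s / l.
have y0 : 0 < y by rewrite divr_gt0.
have hA : 1 + 2 * y <= A.
  have e1 : (3 + 6 * s) / l = 3 / l + 6 * y by rewrite /y; field; rewrite gt_eqF.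
  have e2 : 5 * s ^+ 2 / L = 5 * y ^+ 2 by rewrite -hl /y; field; rewrite gt_eqF.
  have e3 : 0 < 3 / l by rewrite divr_gt0.
  rewrite /A e1 e2.
  have -> : 1 + 2 * y = Num.sqrt ((1 + 2 * y) ^+ 2) by rewrite sqrtr_sqr ger0_norm //; lra.
  rewrite ler_sqrt; last by nra.
  nra.
have LA : 4 * s ^+ 2 <= L * (A - 1) ^+ 2.
  have -> : 4 * s ^+ 2 = L * (2 * y) ^+ 2 by rewrite -hl /y; field; rewrite gt_eqF.
  apply: ler_wpM2l; first lra.
  apply: lerXn2r; rewrite ?nnegrE; lra.
set t := c - m%:R * mu.
have ht : m%:R * b * np * (A - 1) <= t.
  rewrite /t /c hm.
  have hLn : 0 <= L * n%:R by nra.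
  have : L * n%:R * mu <= L * n%:R * (np * b) by apply: ler_wpM2l.
  have -> : L * n%:R * b * np * A = L * n%:R * (np * b) * A by ring.
  have -> : L * n%:R * b * np * (A - 1) = L * n%:R * (np * b) * A - L * n%:R * (np * b) by ring.
  lra.
have A1 : 0 <= A - 1 by nra.
have t0 : 0 <= t by apply: le_trans ht; apply: mulr_ge0 => //; apply: mulr_ge0 => //; nra.
have t2 : 2 * m%:R * b ^+ 2 * s ^+ 2 <= t ^+ 2.
  apply: (le_trans _ (lerXn2r _ _ _ ht)); last 2 first.
  - by rewrite nnegrE; apply: mulr_ge0 => //; apply: mulr_ge0 => //; apply: mulr_ge0 => //; nra.
  - by rewrite nnegrE.
  have e : (m%:R * b * np * (A - 1)) ^+ 2 = m%:R * b ^+ 2 * ((L * n%:R * np ^+ 2) * (A - 1) ^+ 2).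
    by rewrite -hm; ring.
  rewrite e.
  have h1 : L * (A - 1) ^+ 2 <= (L * n%:R * np ^+ 2) * (A - 1) ^+ 2.
    apply: ler_wpM2r; first exact: sqr_ge0.
    rewrite -mulrA ler_peMr //; lra.
  have h2 : 0 <= m%:R * b ^+ 2 by apply: mulr_ge0; [lra|exact: sqr_ge0].
  have h3 : 0 <= s ^+ 2 by exact: sqr_ge0.
  nra.
have bpos : 0 < b ^+ 2 by nra.
have bp : 0 < b by nra.
set lam := t / (4 * m%:R * b ^+ 2).
have lam0 : 0 <= lam by apply: divr_ge0 => //; nra.
set S := fun x : {ffun 'I_m -> U} => \sum_j f (x j).
set w := fun x : {ffun 'I_m -> U} => \prod_j q (x j).
have w0 : forall x, 0 <= w x by move=> x; apply: prodr_ge0.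
have tot : \sum_x w x = 1.
  rewrite /w -(bigA_distr_bigA (fun (j : 'I_m) u => q u)) /=.
  by rewrite prodr_const q1 expr1n.
have ch := @chernoff_sum R U m q f c lam q0 lam0.
have mg := @mgf_bound R U q f mu b lam q0 q1 (erefl mu) fb.
have tail : \sum_(x | c < S x) w x <= expR (- (s ^+ 2) / 4).
  apply: (le_trans ch).
  have hq : 0 <= \sum_u q u * expR (lam * f u).
    by apply: sumr_ge0 => u _; apply: mulr_ge0 => //; exact: expR_ge0.
  have := lerXn2r m hq (expR_ge0 _) mg; rewrite -expRM_natl => mg2.
  apply: (le_trans (ler_wpM2l (expR_ge0 _) mg2)).
  rewrite -expRD ler_expR.
  have -> : - (lam * c) + m%:R * (lam * mu + 2 * lam ^+ 2 * b ^+ 2)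
     = - (t ^+ 2 / (8 * m%:R * b ^+ 2)).
    rewrite /lam /t; field; apply/andP; split; rewrite gt_eqF //.
  rewrite -mulNr ler_pdivrMr; last by nra.
  nra.
have mono : \sum_(x | S x <= c) w x <= prodP q (fun x => AST x <= c).
  rewrite /prodP [X in _ <= X]big_mkcond [X in X <= _]big_mkcond /=.
  apply: ler_sum => x _.
  case: ifP => hS; last by case: ifP => // _; exact: w0.
  have -> : AST x <= c.
    apply: (le_trans (hAST x)); rewrite chain_sum; exact: hS.
  by [].
have split : \sum_x w x = \sum_(x | S x <= c) w x + \sum_(x | c < S x) w x.
  rewrite (bigID (fun x => S x <= c)) /=; congr (_ + _).
  by apply: eq_bigl => x; rewrite ltNge.
have e0 := expR_ge0 (- (s ^+ 2) / 4).
rewrite /c in mono. lra.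
Qed.
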